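(* Let $D$ be an odd prime. For any $\varepsilon>0$ there exist $c,\rho>0$ such that the following holds. Let $n=H+2L$ with $H\le \rho n$, let $\delta$ be a random $2n\times 2n$ boundary operator (as defined in the context) with these parameters, and consider $\ker\delta\subseteq \mathbb{Z}_D^{2n}$. Then the probability that $\ker\delta$ contains a nonzero vector of weight less than $cn$ is $O(D^{(-1/2+\varepsilon)n})$ as $n\to\infty$.
   Context: $\mathbb{Z}_D$ is the field with $D$ elements. Let $\delta_0$ be the $n\times n$ matrix over $\mathbb{Z}_D$ which, in block form with row and column block sizes $H,L,L$ (in this order), has the identity $I_L$ in block position (2,3) and zero blocks elsewhere. A random $2n\times 2n$ boundary operator on $C=C_+\oplus C_-$, $C_\pm=\mathbb{Z}_D^n$, is $\delta=\begin{bmatrix}U_+&0\\0&U_-\end{bmatrix}\begin{bmatrix}0&\delta_0\\ \delta_0&0\end{bmatrix}\begin{bmatrix}U_+^{-1}&0\\0&U_-^{-1}\end{bmatrix}$, where $U_+,U_-$ are independent and uniformly distributed in $\mathrm{GL}(n,\mathbb{Z}_D)$. The weight of a vector is the number of its nonzero coordinates in the standard basis. *)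

(* Defs.v *)
From Stdlib Require Import Reals.
From mathcomp Require Import all_boot all_algebra.

Set Implicit Arguments.
Unset Strict Implicit.
Unset Printing Implicit Defensive.

Import GRing.Theory.
Local Open Scope ring_scope.

(* delta_0 : n x n matrix, n = H + L + L, blocks of sizes H, L, L;
   identity I_L in block position (2,3), zeros elsewhere. *)
Definition delta0 (D H L : nat) : 'M['F_D]_(H + L + L) :=
  \matrix_(i, j) (if [&& (H <= i)%N, (i < H + L)%N & (nat_of_ord j == (i + L)%N)]
                  then 1 else 0).

(* The boundary operator
   delta = diag(U+,U-) [[0,delta0],[delta0,0]] diag(U+^-1,U-^-1)
         = [[0, U+ delta0 U-^-1], [U- delta0 U+^-1, 0]]. *)
Definition boundary (D H L : nat) (Up Um : 'M['F_D]_(H + L + L))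
  : 'M['F_D]_(H + L + L + (H + L + L)) :=
  block_mx 0 (Up *m delta0 D H L *m invmx Um)
           (Um *m delta0 D H L *m invmx Up) 0.

Definition weight (D m : nat) (v : 'cV['F_D]_m) : nat :=
  #|[set i : 'I_m | v i 0 != 0]|.

Definition Rltb (x y : R) : bool := if Rlt_dec x y then true else false.

Definition has_low_weight_kernel_vector (D H L : nat) (c : R)
  (Up Um : 'M['F_D]_(H + L + L)) : bool :=
  [exists v : 'cV['F_D]_(H + L + L + (H + L + L)),
     [&& v != 0, boundary Up Um *m v == 0 &
         Rltb (INR (weight v)) (Rmult c (INR (H + L + L)))]].

Definition bad_count (D H L : nat) (c : R) : nat :=
  #|[set p : 'M['F_D]_(H + L + L) * 'M['F_D]_(H + L + L) |
      [&& p.1 \in unitmx, p.2 \in unitmx &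
          has_low_weight_kernel_vector c p.1 p.2]]|.

Definition GL_count (D n : nat) : nat :=
  #|[set U : 'M['F_D]_n | U \in unitmx]|.

(* Probability under (U+, U-) independent uniform on GL(n, F_D). *)
Definition bad_prob (D H L : nat) (c : R) : R :=
  Rdiv (INR (bad_count D H L c)) (INR (GL_count D (H + L + L) ^ 2)).

(* Main.v *)
Require Import Defs.
From Stdlib Require Import Reals.
From mathcomp Require Import all_boot all_algebra.
From Stdlib Require Import Lra.
Set Implicit Arguments. Unset Strict Implicit. Unset Printing Implicit Defensive.
Import GRing.Theory.
Local Open Scope ring_scope.

Lemma vec_ebase (F : fieldType) n (x : 'cV[F]_n) : x != 0 ->
  exists C : 'M[F]_n, exists a : F, [/\ C \in unitmx, a != 0 & x = a *: (C *m pid_mx 1)].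
Proof.
move=> nz.
have rk : \rank x = 1%N.
  apply/eqP; rewrite eqn_leq rank_leq_col lt0n mxrank_eq0 nz //.
have E := mulmx_ebase x; rewrite rk in E.
exists (col_ebase x), (row_ebase x 0 0); split.
- exact: col_ebase_unit.
- have := row_ebase_unit x; rewrite unitmxE det_mx11 unitfE //.
- transitivity (col_ebase x *m pid_mx 1 *m row_ebase x); first by rewrite E.
  by rewrite {1}[row_ebase x]mx11_scalar mul_mx_scalar.
Qed.

Lemma trans_vec (F : fieldType) n (x y : 'cV[F]_n) : x != 0 -> y != 0 ->
  exists P : 'M[F]_n, P \in unitmx /\ P *m x = y.
Proof.
move=> /vec_ebase [C [a [uC a0 ->]]] /vec_ebase [C' [b [uC' b0 ->]]].
exists ((b / a) *: (C' *m invmx C)); split.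
  by rewrite unitmxZ ?unitfE ?mulf_neq0 ?invr_eq0 // unitmx_mul uC' unitmx_inv.
by rewrite -scalemxAr -scalemxAl scalerA mulmxA -(mulmxA C') mulVmx // mulmx1 mulrC divfK.
Qed.

Definition GLs (F : finFieldType) n := [set U : 'M[F]_n | U \in unitmx].
Definition cnt (F : finFieldType) k n (M : 'M[F]_(k, n)) (x : 'cV[F]_n) :=
  #|[set U : 'M[F]_n | (U \in unitmx) && (M *m (invmx U *m x) == 0)]|.
Definition ker0 (F : finFieldType) k n (M : 'M[F]_(k, n)) :=
  #|[set w : 'cV[F]_n | M *m w == 0]|.

Lemma cnt_le (F : finFieldType) k n (M : 'M[F]_(k, n)) (x y : 'cV[F]_n) :
  x != 0 -> y != 0 -> (cnt M x <= cnt M y)%N.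
Proof.
move=> nx ny; have [P [uP Pxy]] := trans_vec nx ny.
rewrite /cnt -(card_imset _ (can_inj (mulKmx uP))).
apply: subset_leq_card; apply/subsetP => z /imsetP [U]; rewrite inE => /andP [uU kU] -> {z}.
have uPU : P *m U \in unitmx by rewrite unitmx_mul uP.
rewrite inE uPU /= -Pxy.
have -> : P *m x = (P *m U) *m (invmx U *m x) by rewrite -mulmxA (mulmxA U) mulmxV // mul1mx.
by rewrite mulKmx.
Qed.

Lemma card_sum (T : finType) (P : pred T) : #|[set x | P x]| = (\sum_x (P x : nat))%N.
Proof.
rewrite -sum1_card big_mkcond /=; apply: eq_bigr => x _; rewrite inE; by case: (P x).
Qed.

Lemma ker_shift (F : finFieldType) k n (M : 'M[F]_(k, n)) (U : 'M[F]_n) : U \in unitmx ->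
  #|[set x : 'cV[F]_n | (x != 0) && (M *m (invmx U *m x) == 0)]| = (ker0 M).-1.
Proof.
move=> uU.
have -> : [set x : 'cV[F]_n | (x != 0) && (M *m (invmx U *m x) == 0)] =
   (mulmx U) @: ([set w : 'cV[F]_n | M *m w == 0] :\ 0).
  apply/setP => x; rewrite !inE; apply/andP/imsetP => [[nx kx]|[w]].
    exists (invmx U *m x); last by rewrite mulKVmx.
    rewrite !inE kx andbT; apply: contra nx => /eqP h.
    by rewrite -(mulKVmx uU x) h mulmx0.
  rewrite !inE => /andP [nw kw] ->; rewrite mulKmx // kw; split => //.
  apply: contra nw => /eqP h; by rewrite -(mulKmx uU w) h mulmx0.
rewrite card_imset; last exact: (can_inj (mulKmx uU)).
by rewrite /ker0 (cardsD1 0 [set w | M *m w == 0]) inE mulmx0 eqxx add1n.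
Qed.

Lemma sum_cnt (F : finFieldType) k n (M : 'M[F]_(k, n)) :
  (\sum_(y : 'cV[F]_n | y != 0%R) cnt M y = #|GLs F n| * (ker0 M).-1)%N.
Proof.
rewrite /cnt; under eq_bigr do rewrite card_sum.
rewrite exchange_big /= /GLs card_sum big_distrl /=; apply: eq_bigr => U _.
case uU: (U \in unitmx); last by rewrite mul0n big1.
rewrite mul1n -(ker_shift M uU) card_sum [RHS]big_mkcond /=.
rewrite big_mkcond /=; apply: eq_bigr => y _; by case: (y != 0%R).
Qed.

Lemma cnt_bound (F : finFieldType) k n (M : 'M[F]_(k, n)) (x : 'cV[F]_n) :
  x != 0 -> (cnt M x * #|F| ^ n <= #|GLs F n| * ker0 M)%N.
Proof.
move=> nx.
have Hc : forall y : 'cV[F]_n, y != 0 -> cnt M y = cnt M x.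
  by move=> y ny; apply/eqP; rewrite eqn_leq !cnt_le.
have := sum_cnt M.
rewrite (eq_bigr (fun _ => cnt M x)) ?sum_nat_const; last by move=> y; apply: Hc.
have -> : #|[pred y : 'cV[F]_n | y != 0]| = (#|F| ^ n).-1.
  by rewrite cardC1 card_mx muln1.
have K1 : (0 < ker0 M)%N by rewrite /ker0 card_gt0; apply/set0Pn; exists 0; rewrite inE mulmx0.
have N1 : (0 < #|F| ^ n)%N.
  rewrite expn_gt0; apply/orP; left; apply/card_gt0P; by exists 0%R.
have cG : (cnt M x <= #|GLs F n|)%N.
  apply: subset_leq_card; apply/subsetP => U; rewrite !inE => /andP [] //.
move: K1 N1 cG; set c := cnt M x; set G := #|GLs F n|; set K := ker0 M; set N := (#|F| ^ n)%N.
move=> K1 N1 cG E.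
have eN : N = N.-1.+1 by rewrite prednK.
have eK : K = K.-1.+1 by rewrite prednK.
rewrite eN eK mulnS mulnS.
rewrite mulnC E leq_add2r //.
Qed.

Lemma delta0_ker (D H L : nat) (w : 'cV['F_D]_(H + L + L)) :
  delta0 D H L *m w == 0 -> dsubmx w = 0.
Proof.
move=> /eqP E; apply/matrixP => j z; rewrite ord1 mxE [RHS]mxE.
have Hi : (H + j < H + L + L)%N by rewrite -addnA ltn_add2l ltn_addr.
move/matrixP: E => /(_ (Ordinal Hi) 0); rewrite !mxE => <-.
rewrite (bigD1 (rshift (H + L) j)) //= big1 ?addr0.
  rewrite mxE leq_addr /= ltn_add2l ltn_ord /= addnAC eqxx mul1r //.
move=> k nk; rewrite mxE.
case: ifP => [/and3P [_ _ /eqP hk]|_]; last by rewrite mul0r.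
by case/eqP: nk; apply: val_inj; rewrite /= hk addnAC.
Qed.

Lemma ker0_delta0 (D H L : nat) : prime D ->
  (ker0 (delta0 D H L) <= D ^ (H + L))%N.
Proof.
move=> pD; rewrite /ker0.
rewrite -(card_in_imset (f := fun w : 'cV['F_D]_(H + L + L) => usubmx w)).
  apply: leq_trans (max_card _) _; rewrite card_mx card_Fp // muln1 //.
move=> w1 w2; rewrite !inE => /delta0_ker h1 /delta0_ker h2 /= e.
by rewrite -(vsubmxK w1) -(vsubmxK w2) h1 h2 e.
Qed.

Lemma card_bigcup_le (I T : finType) (A : {pred I}) (E : I -> {set T}) :
  (#|\bigcup_(i in A) E i| <= \sum_(i in A) #|E i|)%N.
Proof.
apply: (big_ind2 (fun (X : {set T}) (m : nat) => #|X| <= m)%N).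
- by rewrite cards0.
- move=> X1 m1 X2 m2 h1 h2; apply: leq_trans (leq_card_setU X1 X2) _.
  exact: leq_add.
- by [].
Qed.

Lemma weight_u (D m1 m2 : nat) (v : 'cV['F_D]_(m1 + m2)) :
  (weight (usubmx v) <= weight v)%N.
Proof.
rewrite /weight -(card_imset _ (@lshift_inj m1 m2)).
apply: subset_leq_card; apply/subsetP => z /imsetP [i]; rewrite !inE mxE => h -> //.
Qed.

Lemma weight_d (D m1 m2 : nat) (v : 'cV['F_D]_(m1 + m2)) :
  (weight (dsubmx v) <= weight v)%N.
Proof.
rewrite /weight -(card_imset _ (@rshift_inj m1 m2)).
apply: subset_leq_card; apply/subsetP => z /imsetP [i]; rewrite !inE mxE => h -> //.
Qed.

Lemma Rltb_mono a b r : (a <= b)%N -> Rltb (INR b) r -> Rltb (INR a) r.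
Proof.
move=> /leP h; rewrite /Rltb; case: Rlt_dec => // hb _; case: Rlt_dec => // ha.
by exfalso; apply: ha; apply: Rle_lt_trans (le_INR _ _ h) hb.
Qed.

Definition LW D H L c := [set x : 'cV['F_D]_(H + L + L) |
   (x != 0) && Rltb (INR (weight x)) (Rmult c (INR (H + L + L)))].

Lemma bad_sub D H L c :
  [set p : 'M['F_D]_(H + L + L) * 'M['F_D]_(H + L + L) |
      [&& p.1 \in unitmx, p.2 \in unitmx & has_low_weight_kernel_vector c p.1 p.2]]
  \subset \bigcup_(x in LW D H L c)
     (setX [set U | (U \in unitmx) && (delta0 D H L *m (invmx U *m x) == 0)] (GLs _ _)
      :|: setX (GLs _ _) [set U | (U \in unitmx) && (delta0 D H L *m (invmx U *m x) == 0)]).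
Proof.
apply/subsetP => -[Up Um]; rewrite inE /= => /and3P [uP uM /existsP [v /and3P [nv bv wv]]].
move: bv; rewrite -(vsubmxK v) /boundary mul_block_col !mul0mx add0r addr0 col_mx_eq0.
move=> /andP [hy hx].
have kx : delta0 D H L *m (invmx Up *m usubmx v) == 0.
  rewrite -!mulmxA in hx; by rewrite -(mulKmx uM (delta0 D H L *m (invmx Up *m usubmx v))) (eqP hx) mulmx0.
have ky : delta0 D H L *m (invmx Um *m dsubmx v) == 0.
  rewrite -!mulmxA in hy; by rewrite -(mulKmx uP (delta0 D H L *m (invmx Um *m dsubmx v))) (eqP hy) mulmx0.
case: (boolP (usubmx v == 0)) => [x0 | nx].
  have ny : dsubmx v != 0.
    apply: contra nv => /eqP y0; by rewrite -(vsubmxK v) (eqP x0) y0 col_mx0.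
  apply/bigcupP; exists (dsubmx v).
    by rewrite inE ny /=; apply: Rltb_mono (weight_d v) wv.
by rewrite in_setU !in_setX /GLs !inE uP uM ky orbT.
apply/bigcupP; exists (usubmx v).
  by rewrite inE nx /=; apply: Rltb_mono (weight_u v) wv.
by rewrite in_setU !in_setX /GLs !inE uP uM kx.
Qed.

Lemma bad_nat D H L c : prime D ->
  (bad_count D H L c * D ^ (H + L + L) <=
     #|LW D H L c| * (2 * (GL_count D (H + L + L)) ^ 2 * D ^ (H + L)))%N.
Proof.
move=> pD.
set G := GL_count D (H + L + L).
have hG : #|GLs 'F_D (H + L + L)| = G by [].
apply: leq_trans (leq_mul (subset_leq_card (bad_sub D H L c)) (leqnn _)) _.
apply: leq_trans (leq_mul (card_bigcup_le _ _) (leqnn _)) _.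
rewrite big_distrl /= -sum_nat_const; apply: leq_sum => x.
rewrite inE => /andP [nx _].
apply: leq_trans (leq_mul (leq_card_setU _ _) (leqnn _)) _.
rewrite !cardsX hG.
have cb := cnt_bound (delta0 D H L) nx; rewrite card_Fp // hG in cb.
have kb := ker0_delta0 H L pD.
set k := cnt _ _ in cb *.
have -> : (#|[set U | (U \in unitmx) && (delta0 D H L *m (invmx U *m x) == 0%R)]| = k)%N by [].
rewrite (mulnC G k) addnn -mul2n -mulnA -mulnA -mulnA leq_pmul2l //.
rewrite mulnCA expnS expn1 -mulnA leq_mul2l; apply/orP; right.
apply: leq_trans cb _; rewrite leq_mul2l kb orbT //.
Qed.

Lemma zeros_card (D n : nat) (x : 'cV['F_D]_n) :
  (n - weight x)%N = #|[set i : 'I_n | x i 0 == 0]|.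
Proof.
rewrite /weight -{1}(card_ord n) -(cardsC [set i : 'I_n | x i 0 != 0]) addKn.
by apply: eq_card => i; rewrite !inE negbK.
Qed.

Lemma wgf (D n T : nat) : prime D ->
  (\sum_(x : 'cV['F_D]_n) T ^ (n - weight x) <= (T + D) ^ n)%N.
Proof.
move=> pD.
pose f := fun a : 'F_D => if a == 0 then T else 1%N.
have E1 : forall x : 'cV['F_D]_n, (T ^ (n - weight x) = \prod_i f (x i ord0))%N.
  move=> x; rewrite zeros_card -prod_nat_const big_mkcond /=.
  by apply: eq_bigr => i _; rewrite inE /f.
rewrite (eq_bigr _ (fun x _ => E1 x)).
pose h := fun g : {ffun 'I_n -> 'F_D} => \col_i g i : 'cV['F_D]_n.
pose k := fun x : 'cV['F_D]_n => [ffun i => x i 0].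
have hk : cancel k h by move=> x; apply/matrixP => i j; rewrite ord1 !mxE ffunE.
have kh : cancel h k by move=> g; apply/ffunP => i; rewrite ffunE mxE.
rewrite (reindex h); last by apply: onW_bij; exists k.
under eq_bigr do under eq_bigr do rewrite mxE.
rewrite (_ : (\sum_(g : {ffun 'I_n -> 'F_D}) \prod_i f (g i) = \prod_(i < n) \sum_(a : 'F_D) f a)%N); last first.
  by rewrite bigA_distr_bigA.
have Sf : (\sum_(a : 'F_D) f a <= T + D)%N.
  rewrite (bigD1 0) //= {1}/f eqxx leq_add2l.
  rewrite (eq_bigr (fun _ => 1%N)) => [|a /negPf]; last by rewrite /f => ->.
  rewrite sum1_card; apply: leq_trans (max_card _) _; by rewrite card_Fp.
rewrite prod_nat_const card_ord.
have [->|n0] := posnP n; first by rewrite !expn0.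
by rewrite leq_exp2r.
Qed.

Lemma LW_bound D H L c T : prime D -> (0 < T)%N ->
  #|LW D H L c| = 0%N \/ exists w : nat, Rlt (INR w) (Rmult c (INR (H + L + L))) /\
     (#|LW D H L c| * T ^ (H + L + L - w) <= (T + D) ^ (H + L + L))%N.
Proof.
move=> pD T0.
have [e0|ne] := posnP #|LW D H L c|; [by left | right].
have [x0 x0in wE] := eq_bigmax_cond (fun x => weight x) ne.
exists (weight x0); split.
  move: x0in; rewrite inE /Rltb => /andP [_]; by case: Rlt_dec.
apply: leq_trans (wgf _ T pD).
rewrite -sum_nat_const [X in (_ <= X)%N]big_mkcond /= [X in (X <= _)%N]big_mkcond /=.
apply: leq_sum => x _; case: ifP => // xin.
rewrite leq_pexp2l // leq_sub2l // -wE.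
exact: (@leq_bigmax_cond _ (fun y => y \in LW D H L c) (fun y => weight y) x xin).
Qed.

Local Open Scope R_scope.

Lemma Rpower_pos d y : 0 < Rpower d y.
Proof. unfold Rpower; apply exp_pos. Qed.

Lemma one_plus_le d x : 3 <= d -> 0 <= x -> 1 + x <= Rpower d x.
Proof.
intros hd hx.
apply Rle_trans with (exp x); [apply exp_ineq1_le|].
replace (exp x) with (Rpower (exp 1) x) by (unfold Rpower; rewrite ln_exp; f_equal; ring).
apply Rle_Rpower_l; [lra|split; [apply exp_pos|]].
pose proof exp_le_3; lra.
Qed.

Lemma Rpower_powN d y (N : nat) : 0 < d -> Rpower d y ^ N = Rpower d (y * INR N).
Proof.
intros hd; rewrite -Rpower_pow; last by apply Rpower_pos. by rewrite Rpower_mult.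
Qed.

Lemma real_core (d eps qR rR h l w W bc G2 : R) (N : nat) :
  3 <= d -> 1 <= qR -> rR = qR + 1 -> 3 < qR * eps ->
  0 <= h -> 0 <= l -> INR N = h + 2 * l -> h <= / qR * INR N ->
  0 <= w -> w < / (rR * qR) * INR N -> 0 <= W -> 0 <= bc -> 0 < G2 ->
  qR <= Rpower d qR ->
  bc * Rpower d (INR N) <= W * (2 * G2 * Rpower d (h + l)) ->
  W * Rpower d (rR * (INR N - w)) <= (Rpower d rR + d) ^ N ->
  bc / G2 <= 2 * Rpower d ((- (1/2) + eps) * INR N).
Proof.
intros hd hq hr hqe hh hl hN hH hw0 hw hW hbc hG hqd H1 H2.
move: hN hH hw H1 H2; set n := INR N => hN hH hw H1 H2.
assert (d0 : 0 < d) by lra.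
assert (q0 : 0 < qR) by lra.
assert (k1 : 1 + / Rpower d qR <= Rpower d (/ qR)).
{ apply Rle_trans with (Rpower d (/ Rpower d qR)).
  - apply one_plus_le; [lra|]. left; apply Rinv_0_lt_compat, Rpower_pos.
  - apply Rle_Rpower; [lra|]. apply Rinv_le_contravar; lra. }
assert (k2 : Rpower d rR + d = Rpower d rR * (1 + / Rpower d qR)).
{ rewrite hr Rpower_plus (Rpower_1 d d0).
  pose proof (Rpower_pos d qR). field. lra. }
assert (k3 : (Rpower d rR + d) ^ N <= Rpower d (rR * n + n / qR)).
{ rewrite k2 Rpow_mult_distr Rpower_plus.
  apply Rmult_le_compat.
  - apply pow_le; left; apply Rpower_pos.
  - apply pow_le. pose proof (Rpower_pos d qR).
    assert (0 < / Rpower d qR) by (apply Rinv_0_lt_compat; lra). lra.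
  - rewrite (Rpower_powN _ _ d0). right; unfold n; ring_simplify; reflexivity.
  - apply Rle_trans with (Rpower d (/ qR) ^ N).
    + apply pow_incr; split; [|exact k1].
      assert (0 < / Rpower d qR) by (apply Rinv_0_lt_compat, Rpower_pos). lra.
    + rewrite (Rpower_powN _ _ d0). right; f_equal; unfold n, Rdiv; ring. }
assert (kW : W <= Rpower d (2 * (n / qR))).
{ assert (W * Rpower d (rR * (n - w)) <= Rpower d (rR * n + n / qR)) by lra.
  assert (e : Rpower d (rR * n + n / qR) = Rpower d (rR * (n - w)) * Rpower d (rR * w + n / qR)).
  { rewrite -Rpower_plus; f_equal; ring. }
  rewrite e in H.
  pose proof (Rpower_pos d (rR * (n - w))).
  assert (W <= Rpower d (rR * w + n / qR)).
  { apply Rmult_le_reg_l with (Rpower d (rR * (n - w))); [lra|]. lra. }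
  apply Rle_trans with (1 := H3). apply Rle_Rpower; [lra|].
  assert (rR * w <= n / qR).
  { assert (0 < rR) by lra.
    apply Rmult_lt_compat_l with (r := rR) in hw; [|lra].
    replace (rR * (/ (rR * qR) * n)) with (n / qR) in hw by (field; lra). lra. }
  lra. }
assert (kb : bc <= W * (2 * G2) * Rpower d (- l)).
{ assert (e : Rpower d n = Rpower d (h + l) * Rpower d l).
  { rewrite -Rpower_plus; f_equal. lra. }
  rewrite e in H1. rewrite Rpower_Ropp.
  pose proof (Rpower_pos d (h + l)). pose proof (Rpower_pos d l).
  apply Rmult_le_reg_r with (Rpower d l); [lra|].
  field_simplify; [|lra].
  apply Rmult_le_reg_r with (Rpower d (h + l)); [lra|]. nra. }
assert (kexp : 2 * (n / qR) + - l <= (- (1/2) + eps) * n).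
{ set u := n / qR.
  assert (hu : n = qR * u) by (unfold u; field; lra).
  assert (u0 : 0 <= u) by (unfold u; apply Rmult_le_pos; [apply pos_INR|]; left; apply Rinv_0_lt_compat; lra).
  assert (hH' : h <= u) by (unfold u, Rdiv; rewrite Rmult_comm; exact hH).
  assert (eps * n >= 3 * u) by (rewrite hu; nra).
  lra. }
assert (bc / G2 <= 2 * (W * Rpower d (- l))).
{ unfold Rdiv. apply Rmult_le_reg_r with G2; [lra|].
  rewrite Rmult_assoc Rinv_l; last lra. nra. }
apply Rle_trans with (1 := H).
apply Rmult_le_compat_l; [lra|].
apply Rle_trans with (Rpower d (2 * (n / qR)) * Rpower d (- l)).
- apply Rmult_le_compat_r; [left; apply Rpower_pos| exact kW].
- rewrite -Rpower_plus. apply Rle_Rpower; lra.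
Qed.

Lemma INR_addn a b : INR (a + b)%N = INR a + INR b.
Proof. exact: plus_INR. Qed.
Lemma INR_muln a b : INR (a * b)%N = INR a * INR b.
Proof. exact: mult_INR. Qed.
Lemma INR_expn a b : INR (a ^ b)%N = INR a ^ b.
Proof. elim: b => [|b IH] //=; by rewrite expnS INR_muln IH. Qed.
Lemma INR_leq a b : (a <= b)%N -> INR a <= INR b.
Proof. move=> /leP; exact: le_INR. Qed.

Theorem lemma1 :
  forall (D : nat), prime D -> odd D ->
  forall eps : R, 0 < eps ->
  exists c rho : R, 0 < c /\ 0 < rho /\
  exists (K : R) (N : nat), 0 < K /\
  forall H L : nat,
    (N <= H + 2 * L)%N ->
    INR H <= rho * INR (H + 2 * L)%N ->
    bad_prob D H L c <=
       K * Rpower (INR D) ((- (1/2) + eps) * INR (H + 2 * L)%N).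
Proof.
move=> D pD oD eps heps.
have D3 : (2 < D)%N by move: (prime_gt1 pD) oD; case: (D) => [|[|[|k]]].
have [q hq] := INR_archimed eps 3 heps.
have q1 : (0 < q)%N.
  case: q hq => [|q] //=; rewrite Rmult_0_l => h; lra.
have qR1 : 1 <= INR q by apply: (INR_leq q1).
set r := (q + 1)%N.
have rR : INR r = INR q + 1 by rewrite /r INR_addn.
exists (/ (INR r * INR q)), (/ INR q).
split; [apply: Rinv_0_lt_compat; nra|split; [apply: Rinv_0_lt_compat; lra|]].
exists 2, 0%N; split; first lra.
move=> H L _ hH.
have eN : (H + 2 * L)%N = (H + L + L)%N by rewrite mul2n -addnn addnA.
rewrite eN in hH *.
rewrite /bad_prob.
set n := (H + L + L)%N in hH *.
set c := / (INR r * INR q).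
set T := (D ^ r)%N.
have T0 : (0 < T)%N by rewrite expn_gt0 (ltn_trans _ D3).
have R1 := bad_nat H L c pD.
set G := GL_count D n in R1 *.
have G1 : (0 < G)%N.
  rewrite /G /GL_count card_gt0; apply/set0Pn; exists 1%:M; rewrite inE unitmx1 //.
have dR : 3 <= INR D.
  have := INR_leq D3; have -> : INR 3 = 3 by rewrite /= ; ring. done.
have Rp : forall k, INR (D ^ k)%N = Rpower (INR D) (INR k).
  by move=> k; rewrite INR_expn Rpower_pow //; lra.
case: (LW_bound H L c pD T0) => [W0|[w [hw R2]]].
  rewrite W0 mul0n in R1.
  have bc0 : bad_count D H L c = 0%N.
    by move: R1; rewrite leqn0 muln_eq0 expn_eq0 => /orP [/eqP//|/andP [/eqP D0 _]]; rewrite D0 in D3.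
  rewrite bc0 /Rdiv Rmult_0_l.
  apply: Rmult_le_pos; [lra|left; apply: Rpower_pos].
have wn : (w < n)%N.
  apply/ltP; apply: INR_lt; apply: Rlt_le_trans hw _.
  rewrite -[X in _ <= X]Rmult_1_l; apply: Rmult_le_compat_r; first by apply: pos_INR.
  rewrite -Rinv_1; apply: Rinv_le_contravar; nra.
apply: (real_core (d := INR D) (qR := INR q) (rR := INR r) (h := INR H) (l := INR L)
   (w := INR w) (W := INR #|LW D H L c|) (G2 := INR (G ^ 2)%N)).
- exact: dR.
- exact: qR1.
- exact: rR.
- lra.
- apply: pos_INR.
- apply: pos_INR.
- by rewrite /n !INR_addn; ring.
- exact: hH.
- apply: pos_INR.
- exact: hw.
- apply: pos_INR.
- apply: pos_INR.
- apply: lt_0_INR; apply/ltP; by rewrite expn_gt0 G1.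
- rewrite -Rp; apply: INR_leq; apply: ltnW; apply: leq_trans (ltn_expl q (isT : 1 < 2)%N) _.
  by rewrite leq_exp2r // ltnW.
- move: R1 => /INR_leq; rewrite !INR_muln !Rp !INR_addn (_ : INR 2 = 2) //.
- have e1 : INR (T ^ (n - w))%N = Rpower (INR D) (INR r * (INR n - INR w)).
    rewrite /T -expnM Rp INR_muln minus_INR //; apply/leP; exact: ltnW.
  have e2 : INR ((T + D) ^ n)%N = (Rpower (INR D) (INR r) + INR D) ^ n.
    by rewrite INR_expn INR_addn Rp.
  by rewrite -e1 -e2 -INR_muln; apply: INR_leq.
Qed.
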